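(* Let $n\ge2$ and for $\lambda\in[-1,1]$ let $C_\lambda(\mathbf u)=\prod_{i=1}^n u_i\big[1+\lambda\prod_{i=1}^n(1-u_i)\big]$, $\mathbf u\in[0,1]^n$. Let $\alpha\in\{-1,1\}^n$ and $J=\{i\in\{1,\dots,n\}:\alpha_i=1\}$. If $|J|$ is even, then $C_\lambda$ is $I(\alpha)$ for every $\lambda\in[0,1]$; if $|J|$ is odd, then $C_\lambda$ is $I(\alpha)$ for every $\lambda\in[-1,0]$.
   Context: For $\alpha\in\{-1,1\}^n$ and a random vector $\mathbf X$, write $\alpha\mathbf X=(\alpha_1X_1,\dots,\alpha_nX_n)$; inequalities between vectors are componentwise. $\mathbf X$ is $I(\alpha)$ if for every $\mathbf x\in\mathbb R^n$, $\mathbb P[\alpha\mathbf X>\mathbf x\mid \alpha\mathbf X>\mathbf x']\le \mathbb P[\alpha\mathbf X>\mathbf x\mid \alpha\mathbf X>\mathbf x'']$ whenever $\mathbf x'\le\mathbf x''$ and $\mathbb P[\alpha\mathbf X>\mathbf x'']>0$. A copula is $I(\alpha)$ if a random vector with that distribution function is. $C_\lambda$ is an $n$-copula for each $\lambda\in[-1,1]$. *)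

(* Defs.v *)
From HB Require Import structures.
From mathcomp Require Import all_boot all_order all_algebra.
From mathcomp Require Import all_classical all_reals all_analysis.
Set Implicit Arguments. Unset Strict Implicit. Unset Printing Implicit Defensive.
Import Order.TTheory GRing.Theory Num.Theory.
Local Open Scope classical_set_scope.
Local Open Scope ring_scope.

Definition Clam (R : realType) (n : nat) (lam : R) (u : 'I_n -> R) : R :=
  (\prod_(i < n) u i) * (1 + lam * \prod_(i < n) (1 - u i)).

(* clamping to [0,1]: a copula C, viewed as a distribution function on R^n,
   is F(x) = C(clamp x_1, ..., clamp x_n). *)
Definition clamp01 (R : realType) (x : R) : R := Num.min 1 (Num.max 0 x).

Definition has_copula_df (R : realType) (n : nat) (d : measure_display)
  (T : measurableType d) (P : probability T R) (X : 'I_n -> T -> R)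
  (C : ('I_n -> R) -> R) : Prop :=
  (forall i, measurable_fun setT (X i)) /\
  forall x : 'I_n -> R,
    P [set t | forall i, X i t <= x i] = (C (fun i => clamp01 (x i)))%:E.

Definition alpha_gt (R : realType) (n : nat) (T : Type) (X : 'I_n -> T -> R)
  (alpha : 'I_n -> R) (x : 'I_n -> R) : set T :=
  [set t | forall i, alpha i * X i t > x i].

Definition cond_prob (R : realType) (d : measure_display) (T : measurableType d)
  (P : probability T R) (A B : set T) : R :=
  fine (P (A `&` B)) / fine (P B).

Definition is_I_alpha (R : realType) (n : nat) (d : measure_display)
  (T : measurableType d) (P : probability T R) (X : 'I_n -> T -> R)
  (alpha : 'I_n -> R) : Prop :=
  forall x x' x'' : 'I_n -> R,
    (forall i, x' i <= x'' i) ->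
    (0 < P (alpha_gt X alpha x''))%E ->
    cond_prob P (alpha_gt X alpha x) (alpha_gt X alpha x')
      <= cond_prob P (alpha_gt X alpha x) (alpha_gt X alpha x'').

Definition copula_I_alpha (R : realType) (n : nat) (C : ('I_n -> R) -> R)
  (alpha : 'I_n -> R) : Prop :=
  forall (d : measure_display) (T : measurableType d) (P : probability T R)
    (X : 'I_n -> T -> R), has_copula_df P X C -> is_I_alpha P X alpha.

(* Main.v *)
Require Import Defs.
From HB Require Import structures.
From mathcomp Require Import all_boot all_order all_algebra.
From mathcomp Require Import all_classical all_reals all_analysis.
From mathcomp Require Import ring lra measurable_realfun.
Import Order.TTheory GRing.Theory Num.Theory.
Local Open Scope ring_scope.


Lemma Dmono (R : realFieldType) (X p c : R) : 0 <= X <= 1 -> 0 <= p -> p <= c -> c <= 1 ->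
  (1 - c) * (1 + c * X) <= (1 - p) * (1 + p * X).
Proof. move=> /andP[X0 X1] p0 pc c1.
have e : (1 - p) * (1 + p * X) - (1 - c) * (1 + c * X) = (c - p) * ((1 - X) + X * (p + c)) by ring.
rewrite -subr_ge0 e; apply: mulr_ge0; first lra.
apply: addr_ge0; first lra. apply: mulr_ge0 => //; lra. Qed.

Lemma step_scal (R : realFieldType) (X Y c p q : R) :
  0 <= X -> X <= Y -> Y <= 1 -> 0 <= c <= 1 -> 0 <= p -> p <= q -> q <= 1 ->
  (1 - Num.max c p) * (1 + Num.max c p * Y) * ((1 - q) * (1 + q * X)) <=
  (1 - Num.max c q) * (1 + Num.max c q * Y) * ((1 - p) * (1 + p * X)).
Proof.
move=> X0 XY Y1 /andP[c0 c1] p0 pq q1.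
case/orP: (le_total c p) => [cp|pc].
  rewrite !max_r //; last exact: le_trans cp pq.
  have e : (1 - q) * (1 + q * Y) * ((1 - p) * (1 + p * X)) - (1 - p) * (1 + p * Y) * ((1 - q) * (1 + q * X)) = ((1 - p) * (1 - q)) * ((q - p) * (Y - X)) by ring.
  rewrite -subr_ge0 e; apply: mulr_ge0; apply: mulr_ge0; lra.
rewrite (max_l pc).
case/orP: (le_total c q) => [cq|qc].
  rewrite (max_r cq).
  have h1 : (1 - c) * (1 + c * X) <= (1 - p) * (1 + p * X) by apply: Dmono => //; lra.
  have h2 : (1 + c * Y) * (1 + q * X) <= (1 + q * Y) * (1 + c * X) by nra.
  have h3 : 0 < 1 + c * X by nra.
  have h4 : 0 <= 1 - q by lra.
  have h5 : (1 - c) * (1 + c * Y) * (1 + q * X) <= (1 + q * Y) * ((1 - p) * (1 + p * X)).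
    rewrite -(ler_pM2r h3).
    have : (1 - c) * ((1 + c * Y) * (1 + q * X)) <= (1 - c) * ((1 + q * Y) * (1 + c * X)).
      by apply: ler_wpM2l; lra.
    have : (1 + q * Y) * ((1 - c) * (1 + c * X)) <= (1 + q * Y) * ((1 - p) * (1 + p * X)).
      by apply: ler_wpM2l => //; nra.
    nra.
  nra.
rewrite (max_l qc).
have h1 : (1 - q) * (1 + q * X) <= (1 - p) * (1 + p * X) by apply: Dmono => //; lra.
have h0 : 0 <= (1 - c) * (1 + c * Y) by apply: mulr_ge0; nra.
by rewrite ler_wpM2l.
Qed.

Section Alg.
Variables (R : realFieldType) (n : nat) (mu : R) (v : 'I_n -> R).
Hypothesis mu01 : 0 <= mu <= 1.
Hypothesis v01 : forall i, 0 <= v i <= 1.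

Definition Sfun (w : 'I_n -> R) : R :=
  (\prod_i (1 - w i)) * (1 + mu * \prod_i w i).
Definition vmax (w : 'I_n -> R) : 'I_n -> R := fun i => Num.max (v i) (w i).

Lemma one_step (w u : 'I_n -> R) (j : 'I_n) :
  (forall i, 0 <= w i) -> (forall i, u i <= 1) ->
  (forall i, i != j -> u i = w i) -> w j <= u j ->
  Sfun (vmax w) * Sfun u <= Sfun (vmax u) * Sfun w.
Proof.
move=> w0 u1 uw wu.
have w1 : forall i, w i <= 1.
  move=> i; case: (eqVneq i j) => [->|ij]; first exact: le_trans wu (u1 j).
  by rewrite -uw.
have u0 : forall i, 0 <= u i.
  move=> i; case: (eqVneq i j) => [->|ij]; first exact: le_trans (w0 j) wu.
  by rewrite uw.
rewrite /Sfun /vmax.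
rewrite [\prod_i (1 - Num.max _ (w _))](bigD1 j) //= [\prod_i Num.max _ (w _)](bigD1 j) //=.
rewrite [\prod_i (1 - Num.max _ (u _))](bigD1 j) //= [\prod_i Num.max _ (u _)](bigD1 j) //=.
rewrite [\prod_i (1 - w _)](bigD1 j) //= [\prod_i w _](bigD1 j) //=.
rewrite [\prod_i (1 - u _)](bigD1 j) //= [\prod_i u _](bigD1 j) //=.
rewrite [\prod_(i | i != j) (1 - Num.max _ (u _))](eq_bigr (fun i => 1 - Num.max (v i) (w i))); last by move=> i /uw ->.
rewrite [\prod_(i | i != j) Num.max _ (u _)](eq_bigr (fun i => Num.max (v i) (w i))); last by move=> i /uw ->.
rewrite [\prod_(i | i != j) (1 - u _)](eq_bigr (fun i => 1 - w i)); last by move=> i /uw ->.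
rewrite [\prod_(i | i != j) u _](eq_bigr (fun i => w i)); last by move=> i /uw ->.
set A' := \prod_(i | i != j) (1 - Num.max _ _).
set B' := \prod_(i | i != j) Num.max _ _.
set A := \prod_(i | i != j) (1 - w i).
set B := \prod_(i | i != j) w i.
have mx0 : forall i, 0 <= Num.max (v i) (w i) <= 1.
  move=> i; have /andP[v0 v1] := v01 i.
  apply/andP; split; first by rewrite le_max v0.
  by rewrite ge_max v1 w1.
have hA' : 0 <= A' by apply: prodr_ge0 => i _; have := mx0 i; lra.
have hA : 0 <= A by apply: prodr_ge0 => i _; have := w1 i; lra.
have hB : 0 <= B by apply: prodr_ge0.
have hBB' : B <= B' by apply: ler_prod => i _; rewrite w0 le_max lexx orbT.
have hB'1 : B' <= 1 by apply: prodr_ile1 => i _; exact: mx0.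
have /andP[mu0 mu1] := mu01.
have hX : 0 <= mu * B by apply: mulr_ge0.
have hXY : mu * B <= mu * B' by apply: ler_wpM2l.
have hY1 : mu * B' <= 1.
  have : mu * B' <= mu * 1 by apply: ler_wpM2l. by rewrite mulr1 => /le_trans; apply.
have := @step_scal R (mu * B) (mu * B') (v j) (w j) (u j) hX hXY hY1 (v01 j) (w0 j) wu (u1 j).
move=> H.
have hAA : 0 <= A' * A by apply: mulr_ge0.
have := ler_wpM2l hAA H.
set p := w j; set q := u j; set c := v j.
move=> H2.
have e1 : (1 - Num.max c p) * A' * (1 + mu * (Num.max c p * B')) * ((1 - q) * A * (1 + mu * (q * B)))
  = A' * A * ((1 - Num.max c p) * (1 + Num.max c p * (mu * B')) * ((1 - q) * (1 + q * (mu * B)))) by ring.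
have e2 : (1 - Num.max c q) * A' * (1 + mu * (Num.max c q * B')) * ((1 - p) * A * (1 + mu * (p * B)))
  = A' * A * ((1 - Num.max c q) * (1 + Num.max c q * (mu * B')) * ((1 - p) * (1 + p * (mu * B)))) by ring.
by rewrite e1 e2.
Qed.

Lemma Sfun_gt0 w : (forall i, 0 <= w i) -> (forall i, w i < 1) -> 0 < Sfun w.
Proof.
move=> w0 w1; rewrite /Sfun; apply: mulr_gt0.
  by apply: prodr_gt0 => i _; rewrite subr_gt0.
have : 0 <= mu * \prod_i w i by apply: mulr_ge0; [case/andP: mu01|apply: prodr_ge0].
lra.
Qed.

Lemma Sfun_pos_lt1 w : (forall i, w i <= 1) -> 0 < Sfun w -> forall i, w i < 1.
Proof.
move=> w1 hS i; rewrite lt_neqAle w1 andbT; apply/negP => /eqP e.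
by move: hS; rewrite /Sfun (bigD1 i) //= e subrr !mul0r ltxx.
Qed.

Lemma ratio_le (a b d e : R) : 0 < d -> 0 < e -> a * e <= b * d -> a / d <= b / e.
Proof. by move=> d0 e0 h; rewrite ler_pdivrMr // mulrAC ler_pdivlMr. Qed.

Lemma chain (w w' : 'I_n -> R) :
  (forall i, 0 <= w i) -> (forall i, w i <= w' i) -> (forall i, w' i < 1) ->
  Sfun (vmax w) / Sfun w <= Sfun (vmax w') / Sfun w'.
Proof.
move=> w0 ww' w'1.
pose wk k := fun i : 'I_n => if (i < k)%N then w' i else w i.
have wk0 : forall k i, 0 <= wk k i.
  by move=> k i; rewrite /wk; case: ifP => // _; exact: le_trans (w0 i) (ww' i).
have wk1 : forall k i, wk k i < 1.
  by move=> k i; rewrite /wk; case: ifP => // _; exact: le_lt_trans (ww' i) (w'1 i).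
have E0 : wk 0%N = w by apply/funext => i.
have En : wk n = w' by apply/funext => i; rewrite /wk ltn_ord.
rewrite -E0 -En.
suff : forall k, Sfun (vmax (wk 0%N)) / Sfun (wk 0%N) <= Sfun (vmax (wk k)) / Sfun (wk k) by [].
elim=> [//|k IH]; apply: le_trans IH _.
case: (ltnP k n) => kn; last first.
  have -> : wk k.+1 = wk k.
    apply/funext => i; rewrite /wk.
    have h1 := leq_trans (ltn_ord i) kn.
    by rewrite h1 (ltn_trans h1 (ltnSn k)).
  by [].
apply: ratio_le; [exact: Sfun_gt0|exact: Sfun_gt0|].
apply: (@one_step _ _ (Ordinal kn)) => //.
- by move=> i; exact: ltW.
- move=> i /eqP ij; rewrite /wk ltnS leq_eqVlt.
  have -> : (nat_of_ord i == k) = false.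
    by apply/eqP => ik; apply: ij; apply: val_inj.
  by [].
- by rewrite /wk /= ltnn ltnSn.
Qed.
End Alg.
Arguments Sfun {R n}.
Arguments vmax {R n}.

Section Clamp.
Variable R : realType.
Local Notation cl := (@clamp01 R).

Lemma clE (x : R) : cl x = if x <= 0 then 0 else if x <= 1 then x else 1.
Proof.
rewrite /clamp01; case/orP: (le_total x 0) => h.
  by rewrite h (max_l h) (min_r ler01).
have [->|hx] := eqVneq x 0; first by rewrite lexx (max_l (lexx 0)) (min_r ler01).
have h' : (x <= 0) = false by apply/negbTE; rewrite -ltNge lt_neqAle eq_sym hx h.
rewrite h' (max_r h); case/orP: (le_total x 1) => h1.
  by rewrite h1 (min_r h1).
have [->|hx1] := eqVneq x 1; first by rewrite lexx (min_l (lexx 1)).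
have h1' : (x <= 1) = false by apply/negbTE; rewrite -ltNge lt_neqAle eq_sym hx1 h1.
by rewrite h1' (min_l h1).
Qed.

Lemma cl01 x : 0 <= cl x <= 1.
Proof. by rewrite /clamp01 le_min ler01 le_max lexx ge_min lexx. Qed.

Lemma cl_mono x y : x <= y -> cl x <= cl y.
Proof.
move=> xy; rewrite !clE.
case: (lerP x 0) => h1; case: (lerP y 0) => h2; try lra;
case: (lerP x 1) => h3; case: (lerP y 1) => h4; lra.
Qed.

Lemma cl_lip x y : x <= y -> cl y - cl x <= y - x.
Proof.
move=> xy; rewrite !clE.
case: (lerP x 0) => h1; case: (lerP y 0) => h2; try lra;
case: (lerP x 1) => h3; case: (lerP y 1) => h4; lra.
Qed.

Lemma cl_ge1 x : 1 <= x -> cl x = 1.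
Proof. move=> h; rewrite clE; case: (lerP x 0) => h1; first lra. case: (lerP x 1) => h2 //; lra. Qed.

Lemma cl1 : cl 1 = 1. Proof. exact: cl_ge1. Qed.
End Clamp.

Section Prob.
Variables (R : realType) (n : nat) (lam : R) (d : measure_display) (T : measurableType d)
  (P : probability T R) (X : 'I_n -> T -> R).
Hypothesis n2 : (2 <= n)%N.
Hypothesis hdf : has_copula_df P X (Clam lam).

Local Notation cl := (@clamp01 R).
Local Open Scope classical_set_scope.

Let mX : forall i, measurable_fun setT (X i) := proj1 hdf.

Lemma mset (f : T -> bool) : measurable_fun setT f -> measurable [set t | f t].
Proof.
move=> mf.
rewrite (_ : [set t | f t] = f @^-1` [set true]); last by apply/seteqP; split => t /=.
by rewrite -[X in measurable X]setTI; apply: mf.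
Qed.

Lemma mle i c : measurable [set t | X i t <= c].
Proof. by apply: mset; apply: measurable_fun_ler => //; exact: measurable_cst. Qed.

Lemma mlt i c : measurable [set t | c < X i t].
Proof. by apply: mset; apply: measurable_fun_ltr => //; exact: measurable_cst. Qed.

Lemma meq i c : measurable [set t | X i t = c].
Proof.
rewrite (_ : [set t | X i t = c] = [set t | X i t == c]); last first.
  by apply/seteqP; split => t /= /eqP.
by apply: mset; apply: measurable_fun_eqr => //; exact: measurable_cst.
Qed.

Lemma mall (Q : 'I_n -> T -> Prop) : (forall i, measurable [set t | Q i t]) ->
  measurable [set t | forall i, Q i t].
Proof.
move=> mQ.
rewrite (_ : [set t | forall i, Q i t] = \bigcap_(i in [set: 'I_n]) [set t | Q i t]).
  by apply: fin_bigcap_measurable => //; exact: finite_finset.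
apply/seteqP; split => t /= h i; [move=> _; exact: h|exact: h].
Qed.

Definition Ev (s : seq 'I_n) (a b : 'I_n -> R) :=
  [set t | forall i, X i t <= b i /\ (i \in s -> a i < X i t)].

Lemma mEv s a b : measurable (Ev s a b).
Proof.
apply: mall => i /=; case: (boolP (i \in s)) => his.
  rewrite (_ : [set t | _] = [set t | X i t <= b i] `&` [set t | a i < X i t]).
    exact: measurableI (mle _ _) (mlt _ _).
  apply/seteqP; split => t /= [h1 h2]; split => //; exact: h2.
rewrite (_ : [set t | X i t <= b i /\ (false -> a i < X i t)] = [set t | X i t <= b i]); first exact: mle.
by apply/seteqP; split => t /=; [case|split => //].
Qed.

Definition ps (t : R) := t * (1 - t).
Definition Lf (s : seq 'I_n) (a b : 'I_n -> R) i := cl (b i) - (if i \in s then cl (a i) else 0).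
Definition Kf (s : seq 'I_n) (a b : 'I_n -> R) i := ps (cl (b i)) - (if i \in s then ps (cl (a i)) else 0).

Lemma prod3 (F1 F2 F3 : 'I_n -> R) j : (forall i, i != j -> F2 i = F1 i) ->
  (forall i, i != j -> F3 i = F1 i) -> F3 j = F1 j - F2 j ->
  \prod_i F1 i - \prod_i F2 i = \prod_i F3 i.
Proof.
move=> h2 h3 hj.
rewrite (bigD1 j) //= [\prod_i F2 i](bigD1 j) //= [\prod_i F3 i](bigD1 j) //=.
rewrite (eq_bigr _ h2) (eq_bigr _ h3) hj; ring.
Qed.

Lemma box s a b : uniq s -> (forall i, i \in s -> a i <= b i) ->
  P (Ev s a b) = ((\prod_i Lf s a b i) + lam * \prod_i Kf s a b i)%:E.
Proof.
elim: s b => [|j s IH] b /=.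
  move=> _ _.
  rewrite (_ : Ev [::] a b = [set t | forall i, X i t <= b i]); last first.
    by apply/seteqP; split => t /= h i; [case: (h i)|split].
  have hL : forall i, Lf [::] a b i = cl (b i).
    by move=> i; rewrite /Lf (_ : (i \in [::]) = false) // subr0.
  have hK : forall i, Kf [::] a b i = cl (b i) * (1 - cl (b i)).
    by move=> i; rewrite /Kf (_ : (i \in [::]) = false) // subr0.
  rewrite (proj2 hdf) /Clam (eq_bigr _ (fun i _ => hL i)) (eq_bigr _ (fun i _ => hK i)).
  congr (_%:E); rewrite big_split /=; ring.
case/andP => js us hab.
pose b' := fun i => if i == j then a j else b i.
have hab' : forall i, i \in s -> a i <= b' i.
  move=> i his; rewrite /b'; case: eqP => [ij|_]; first by rewrite ij.
  by apply: hab; rewrite in_cons his orbT.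
have hEv : Ev (j :: s) a b = Ev s a b `\` Ev s a b'.
  apply/seteqP; split => t /=.
    move=> h; split.
      move=> i; case: (h i) => h1 h2; split => // his; apply: h2.
      by rewrite in_cons his orbT.
    move=> h'; case: (h' j) => h1 _; case: (h j) => _ h2.
    have h3 := h2 (mem_head _ _); move: h1 h3; rewrite /b' eqxx; lra.
  move=> [h hn] i; case: (eqVneq i j) => [->|ij].
    split; first by case: (h j).
    move=> _; rewrite ltNge; apply/negP => hle; apply: hn => k.
    rewrite /b' /=; case: (eqVneq k j) => [->|kj].
      by split => // jin; rewrite jin in js.
    by case: (h k).
  case: (h i) => h1 h2; split => // /[!in_cons] /orP[/eqP ij'|his].
    by move: ij; rewrite ij' eqxx.
  exact: h2.
have hsub : Ev s a b' `<=` Ev s a b.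
  move=> t /= h i; case: (h i) => h1 h2; split => //.
  move: h1; rewrite /b'; case: eqP => [->|_] // h1.
  by apply: le_trans h1 _; apply: hab; exact: mem_head.
have habs : forall i, i \in s -> a i <= b i.
  by move=> i his; apply: hab; rewrite in_cons his orbT.
have hA := IH b us habs.
have hB := IH b' us hab'.
have hD : P (Ev s a b `\` Ev s a b') = (P (Ev s a b) - P (Ev s a b `&` Ev s a b'))%E.
  have hfin : (P (Ev s a b) < +oo)%E by rewrite hA ltey.
  by apply: measureD; [exact: mEv|exact: mEv|exact: hfin].
rewrite hEv hD setIidr // hA hB -EFinB; congr (_%:E).
  have eL := @prod3 (Lf s a b) (Lf s a b') (Lf (j :: s) a b) j.
  have eK := @prod3 (Kf s a b) (Kf s a b') (Kf (j :: s) a b) j.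
  rewrite -eL; last 3 first.
  - by move=> i ij; rewrite /Lf /b' (negbTE ij).
  - by move=> i ij; rewrite /Lf in_cons (negbTE ij).
  - by rewrite /Lf /b' eqxx mem_head (negbTE js); ring.
  rewrite -eK; last 3 first.
  - by move=> i ij; rewrite /Kf /b' (negbTE ij).
  - by move=> i ij; rewrite /Kf in_cons (negbTE ij).
  - by rewrite /Kf /b' eqxx mem_head (negbTE js); ring.
  ring.
Qed.

Definition G1 := [set t | forall i, X i t <= 1].
Lemma mG1 : measurable G1. Proof. by apply: mall => i; exact: mle. Qed.

Lemma PG1 : P G1 = 1%E.
Proof.
have h0 : (0 < n)%N := ltnW n2.
have h := proj2 hdf (fun _ => 1).
rewrite /G1; rewrite h /Clam; congr (_%:E).
rewrite [\prod_i (1 - _)](bigD1 (Ordinal h0)) //= cl1 subrr mul0r mulr0 addr0.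
by rewrite big1 ?mulr1 // => i _; rewrite cl1.
Qed.

Lemma PcG1 : P (~` G1) = 0%E.
Proof. by rewrite probability_setC ?PG1 ?subee //; exact: mG1. Qed.

Lemma aslem (C B : set T) : measurable C -> measurable B -> P (~` B) = 0%E ->
  P C = P (C `&` B).
Proof.
move=> mC mB hB.
have hDI : P C = (P (C `\` B) + P (C `&` B))%E := measureDI P mC mB.
rewrite hDI.
suff -> : P (C `\` B) = 0%E by rewrite add0e.
have hle : (P (C `\` B) <= P (~` B))%E.
  by apply: le_measure; rewrite ?inE; [exact: measurableD|exact: measurableC|move=> t []].
apply/le_anti/andP; split; [by rewrite -hB|exact: measure_ge0].
Qed.

Lemma other i : exists k : 'I_n, k != i.
Proof.
have h0 : (0 < n)%N := ltnW n2.
case: (eqVneq i (Ordinal h0)) => [->|h]; last by exists (Ordinal h0); rewrite eq_sym.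
by exists (Ordinal n2).
Qed.

Lemma Peq i c : P [set t | X i t = c] = 0%E.
Proof.
have [k ki] := other i.
have mC := meq i c.
rewrite (@aslem _ _ mC mG1 PcG1).
apply/le_anti/andP; split; last exact: measure_ge0.
apply/lee_addgt0Pr => e e0; rewrite add0e.
pose a := fun j : 'I_n => if j == i then c - e else 1.
pose b := fun j : 'I_n => if j == i then c else 1.
have hsub : [set t | X i t = c] `&` G1 `<=` Ev [:: i] a b.
  move=> t [/= h1 h2] j; rewrite /a /b; case: (eqVneq j i) => [->|ji].
    split; first by rewrite h1.
    by move=> _; rewrite h1; lra.
  split; first exact: h2.
  by rewrite mem_seq1 (negbTE ji).
have hle : (P ([set t | X i t = c] `&` G1) <= P (Ev [:: i] a b))%E.
  by apply: le_measure; rewrite ?inE //; [exact: measurableI mC mG1|exact: mEv].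
apply: le_trans hle _.
rewrite box //; last by move=> j; rewrite mem_seq1 => /eqP ->; rewrite /a /b eqxx; lra.
rewrite lee_fin.
have hK : \prod_j Kf [:: i] a b j = 0.
  rewrite (bigD1 k) //= /Kf /b /ps (negbTE ki) mem_seq1 (negbTE ki) cl1 subrr.
  by rewrite mulr0 subr0 mul0r.
have hL : \prod_j Lf [:: i] a b j = cl c - cl (c - e).
  rewrite (bigD1 i) //= big1 ?mulr1.
    by rewrite /Lf /a /b eqxx mem_seq1 eqxx.
  by move=> j ji; rewrite /Lf /b mem_seq1 (negbTE ji) cl1 subr0.
rewrite hK mulr0 addr0 hL.
have := @cl_lip R (c - e) c ltac:(lra). lra.
Qed.

Lemma PBc i c : P (~` [set t | X i t <= 1 /\ X i t <> c]) = 0%E.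
Proof.
have mB : measurable [set t | X i t <= 1 /\ X i t <> c] :=
  measurableI _ _ (mle i 1) (measurableC (meq i c)).
apply/le_anti/andP; split; last exact: measure_ge0.
have h1 : (P (~` [set t | (X i t <= 1)%R /\ X i t <> c]) <= P (~` G1 `|` [set t | X i t = c]))%E.
  apply: le_measure; rewrite ?inE.
  - exact: measurableC.
  - exact: measurableU (measurableC mG1) (meq _ _).
  - move=> t /= /not_andP [h|h]; [left => h'; apply: h; exact: h' | right; exact: (contrapT h)].
have h2 : (P (~` G1 `|` [set t | X i t = c]) <= P (~` G1) + P [set t | X i t = c])%E.
  exact: measureU2 (measurableC mG1) (meq _ _).
apply: (le_trans h1); apply: (le_trans h2); rewrite PcG1 Peq adde0 //.
Qed.

Lemma asall (Bs : 'I_n -> set T) (C : set T) : measurable C ->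
  (forall i, measurable (Bs i)) -> (forall i, P (~` Bs i) = 0%E) ->
  forall s : seq 'I_n, measurable [set t | forall i, i \in s -> Bs i t] /\
    P C = P (C `&` [set t | forall i, i \in s -> Bs i t]).
Proof.
move=> mC mB hB; elim => [|j s [IHm IHe]].
  have -> : [set t | forall i, i \in [::] -> Bs i t] = setT.
    by apply/seteqP; split => t _ // i.
  by split; [exact: measurableT|rewrite setIT].
have e : [set t | forall i, i \in j :: s -> Bs i t] =
    [set t | forall i, i \in s -> Bs i t] `&` Bs j.
  apply/seteqP; split => t /=.
    move=> h; split; [move=> i his; apply: h; by rewrite in_cons his orbT|apply: h; exact: mem_head].
  case=> h hj i; rewrite in_cons; case/orP => [/eqP ->|his]; first exact: hj.
  exact: h.
rewrite e; split; first exact: measurableI.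
rewrite IHe setIA; exact: (@aslem _ _ (measurableI _ _ mC IHm) (mB j) (hB j)).
Qed.

Variable alpha : 'I_n -> R.
Hypothesis apm : forall i, alpha i = 1 \/ alpha i = -1.

Definition gv i (y : R) := if alpha i == 1 then cl y else 1 - cl (- y).
Definition vv (x : 'I_n -> R) i := gv i (x i).
Definition sJ := [seq i <- enum 'I_n | alpha i == 1].
Definition mu := lam * (-1) ^+ #|[set i : 'I_n | alpha i == 1]%SET|.

Lemma gv01 i y : 0 <= gv i y <= 1.
Proof.
rewrite /gv; case: ifP => _; first exact: cl01.
by have := @cl01 R (- y); case/andP => h1 h2; apply/andP; split; lra.
Qed.

Lemma gv_mono i y z : y <= z -> gv i y <= gv i z.
Proof.
rewrite /gv; case: ifP => _; first exact: cl_mono.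
move=> yz; have := @cl_mono R (- z) (- y) ltac:(lra); lra.
Qed.

Lemma gv_max i y z : gv i (Num.max y z) = Num.max (gv i y) (gv i z).
Proof.
case/orP: (le_total y z) => h.
  by rewrite (max_r h) (max_r (@gv_mono i y z h)).
by rewrite (max_l h) (max_l (@gv_mono i z y h)).
Qed.

Lemma mgt x : measurable (alpha_gt X alpha x).
Proof.
apply: mall => i /=; apply: mset; apply: measurable_fun_ltr => //.
by apply: measurable_funM => //; exact: measurable_cst.
Qed.

Lemma m1neq1 : ((-1 : R) == 1) = false.
Proof. by apply/negbTE/eqP => h; lra. Qed.

Lemma Pgt x : P (alpha_gt X alpha x) = (Sfun mu (vv x))%:E.
Proof.
pose a := x.
pose b := fun i => if alpha i == 1 then Num.max (x i) 1 else - x i.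
pose Bs := fun i => [set t | X i t <= 1 /\ X i t <> - x i].
have mBs : forall i, measurable (Bs i) := fun i => measurableI _ _ (mle i 1) (measurableC (meq i (- x i))).
have hBs : forall i, P (~` Bs i) = 0%E := fun i => PBc i (- x i).
have us : uniq sJ by rewrite filter_uniq // enum_uniq.
have hsJ : forall i, (i \in sJ) = (alpha i == 1) by move=> i; rewrite mem_filter mem_enum andbT.
have hab : forall i, i \in sJ -> a i <= b i.
  by move=> i; rewrite hsJ /a /b => ->; rewrite le_max lexx.
have [mG eG] := @asall Bs _ (mgt x) mBs hBs (enum 'I_n).
have [_ eE] := @asall Bs _ (mEv sJ a b) mBs hBs (enum 'I_n).
have eq : alpha_gt X alpha x `&` [set t | forall i, i \in enum 'I_n -> Bs i t] =
          Ev sJ a b `&` [set t | forall i, i \in enum 'I_n -> Bs i t].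
  apply/seteqP; split => t /= [h hB]; split => // i;
    have [hB1 hB2] := hB i (mem_enum _ i); have := h i; rewrite /a /b hsJ;
    case: (apm i) => ->; rewrite ?eqxx ?m1neq1.
  - by rewrite mul1r => hi; split => //; rewrite le_max hB1 orbT.
  - by rewrite mulN1r => hi; split => //; lra.
  - by rewrite mul1r => -[_ ->].
  - move=> [hi _]; rewrite mulN1r.
    have : X i t < - x i by rewrite lt_neqAle hi andbT; apply/eqP.
    lra.
rewrite eG eq -eE box //.
congr (_%:E).
have hL : forall i, Lf sJ a b i = 1 - vv x i.
  move=> i; rewrite /Lf /vv /gv hsJ /b /a; case: (apm i) => ->; rewrite ?eqxx ?m1neq1.
    by rewrite cl_ge1 // le_max lexx orbT.
  by rewrite subr0; ring.
have hK : forall i, Kf sJ a b i = (if alpha i == 1 then -1 else 1) * (vv x i * (1 - vv x i)).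
  move=> i; rewrite /Kf /vv /gv /ps hsJ /b /a; case: (apm i) => ->; rewrite ?eqxx ?m1neq1.
    by rewrite cl_ge1 ?le_max ?lexx ?orbT //; ring.
  by rewrite subr0; ring.
rewrite (eq_bigr _ (fun i _ => hL i)) (eq_bigr _ (fun i _ => hK i)) !big_split /=.
have hsg : \prod_i (if alpha i == 1 then -1 else 1 : R) = (-1) ^+ #|[set i : 'I_n | alpha i == 1]%SET|.
  rewrite -big_mkcond /=.
  rewrite (eq_bigl (fun i => i \in [set i : 'I_n | alpha i == 1]%SET)); last by move=> i; rewrite inE.
  by rewrite prodr_const.
rewrite hsg /Sfun /mu; ring.
Qed.

Lemma Ialpha : 0 <= mu <= 1 -> is_I_alpha P X alpha.
Proof.
move=> mu01 x x' x'' hx hpos.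
have ex : forall y y', alpha_gt X alpha y `&` alpha_gt X alpha y' =
    alpha_gt X alpha (fun i => Num.max (y i) (y' i)).
  move=> y y'; apply/seteqP; split => t /=.
    by move=> [h1 h2] i; rewrite gt_max h1 h2.
  by move=> h; split => i; have := h i; rewrite gt_max => /andP[].
have ev : forall y y', vv (fun i => Num.max (y i) (y' i)) = vmax (vv y) (vv y').
  by move=> y y'; apply/funext => i; rewrite /vv /vmax gv_max.
rewrite /cond_prob !ex !Pgt /= !ev.
have v01 : forall y i, 0 <= vv y i <= 1 by move=> y i; exact: gv01.
have w'1 : forall i, vv x'' i < 1.
  apply: (@Sfun_pos_lt1 _ _ mu); first by move=> i; case/andP: (v01 x'' i).
  by move: hpos; rewrite Pgt lte_fin.
apply: chain => //.
- by move=> i; case/andP: (v01 x' i).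
- by move=> i; apply: gv_mono.
Qed.
End Prob.

Theorem mainTheorem8 (R : realType) (n : nat) (alpha : 'I_n -> R) :
  (2 <= n)%N ->
  (forall i, alpha i = 1 \/ alpha i = -1) ->
  (~~ odd #|[set i : 'I_n | alpha i == 1]| ->
     forall lam : R, 0 <= lam <= 1 -> copula_I_alpha (Clam lam) alpha) /\
  (odd #|[set i : 'I_n | alpha i == 1]| ->
     forall lam : R, -1 <= lam <= 0 -> copula_I_alpha (Clam lam) alpha).
Proof.
move=> n2 apm.
have key : forall lam : R, 0 <= lam * (-1) ^+ #|[set i : 'I_n | alpha i == 1]| <= 1 ->
    copula_I_alpha (Clam lam) alpha.
  move=> lam hmu dd T P X hdf; apply: Ialpha; [exact: n2|exact: hdf|exact: apm|exact: hmu].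
split => hodd lam /andP[l0 l1]; apply: key.
  by rewrite -signr_odd (negbTE hodd) expr0 mulr1 l0 l1.
by rewrite -signr_odd hodd expr1 mulrN1; apply/andP; split; lra.
Qed.
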